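(* Let $d\ge1$, $n\ge2$ be integers, $\kappa_d$ the volume of the $d$-dimensional unit ball, $V\ge0$, $-d/2<\tau_1<\dots<\tau_n$ reals, $x_i=\tau_i+d/2$, and let $\Sigma_n$ have entries $\frac{Vd\kappa_d}{2(x_i+x_j)}$, with eigenvalues $\lambda_1\le\dots\le\lambda_n$. Put $Q=\sum_{l=1}^n\sum_{k=1}^n\frac{n}{(x_k+x_l)^2}-\Big(\sum_{i=1}^n\frac{1}{2x_i}\Big)^2$ and $$\bar S_n=\frac{Vd\kappa_d\Big(\sum_{i=1}^n\frac1{2x_i}+\sqrt{(n-1)Q}\Big)}{2n},\qquad \underline S_n=\frac{Vd\kappa_d\prod_{1\le i<j\le n}(x_i-x_j)^2}{2\prod_{1\le i,j\le n}(x_i+x_j)\Big(\frac{\sum_{i=1}^n\frac{\sqrt{n-1}}{2x_i}+\sqrt Q}{n\sqrt{n-1}}\Big)^{n-1}}.$$ Then $\underline S_n\le\lambda_1\le\dots\le\lambda_n\le\bar S_n$.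
   Context: $\Sigma_n$ is the asymptotic covariance matrix of normalized length power functionals in the subcritical regime. *)

(* Defs.v *)
From HB Require Import structures.
From mathcomp Require Import all_boot all_order all_algebra.
From mathcomp Require Import all_classical all_reals all_analysis.
Set Implicit Arguments. Unset Strict Implicit. Unset Printing Implicit Defensive.
Import Order.TTheory GRing.Theory Num.Theory.
Local Open Scope ring_scope.

(* Volume of the d-dimensional unit ball, via the standard recurrence
   kappa_0 = 1, kappa_1 = 2, kappa_{d+2} = 2 pi / (d+2) * kappa_d
   (equivalently pi^(d/2) / Gamma(d/2+1)). *)
Fixpoint unit_ball_vol (R : realType) (d : nat) : R :=
  match d with
  | 0 => 1
  | 1 => 2
  | d'.+2 as d2 => (2 * pi / d2%:R) * unit_ball_vol R d'
  end.

Definition xpar (R : realType) (d n : nat) (tau : 'I_n -> R) (i : 'I_n) : R :=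
  tau i + d%:R / 2.

Definition Sigma (R : realType) (d n : nat) (V : R) (tau : 'I_n -> R) : 'M[R]_n :=
  \matrix_(i, j) (V * d%:R * unit_ball_vol R d / (2 * (xpar d tau i + xpar d tau j))).

Definition Qpar (R : realType) (d n : nat) (tau : 'I_n -> R) : R :=
  (\sum_(l < n) \sum_(k < n) n%:R / (xpar d tau k + xpar d tau l) ^+ 2)
  - (\sum_(i < n) 1 / (2 * xpar d tau i)) ^+ 2.

Definition S_upper (R : realType) (d n : nat) (V : R) (tau : 'I_n -> R) : R :=
  V * d%:R * unit_ball_vol R d *
  ((\sum_(i < n) 1 / (2 * xpar d tau i)) + Num.sqrt ((n%:R - 1) * Qpar d tau))
  / (2 * n%:R).

Definition S_lower (R : realType) (d n : nat) (V : R) (tau : 'I_n -> R) : R :=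
  V * d%:R * unit_ball_vol R d *
  (\prod_(i < n) \prod_(j < n | (i < j)%N) (xpar d tau i - xpar d tau j) ^+ 2)
  / (2 * (\prod_(i < n) \prod_(j < n) (xpar d tau i + xpar d tau j)) *
     ((\sum_(i < n) Num.sqrt (n%:R - 1) / (2 * xpar d tau i) + Num.sqrt (Qpar d tau))
       / (n%:R * Num.sqrt (n%:R - 1))) ^+ n.-1).

(* Main.v *)
Require Import Defs.
From HB Require Import structures.
From mathcomp Require Import all_boot all_order all_algebra.
From mathcomp Require Import all_classical all_reals all_analysis.
From mathcomp Require Import complex.
From mathcomp Require Import ring lra.
Import Order.TTheory GRing.Theory Num.Theory.
Local Open Scope ring_scope.
Set Implicit Arguments. Unset Strict Implicit. Unset Printing Implicit Defensive.
Section PC.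
Variable R : realFieldType.

Lemma sum_sq_expand n (A : 'M[R]_n) (v : 'rV[R]_n) (a b : R) :
  \sum_i \sum_j (A i j + a * (i == j)%:R + b * (v 0 i * v 0 j)) ^+ 2 =
  \sum_i \sum_j A i j ^+ 2 + a ^+ 2 * n%:R
  + b ^+ 2 * (\sum_i v 0 i ^+ 2) ^+ 2 + 2 * a * \tr A
  + 2 * b * (\sum_i \sum_j A i j * v 0 i * v 0 j)
  + 2 * a * b * (\sum_i v 0 i ^+ 2).
Proof.
have E : forall i j, (A i j + a * (i == j)%:R + b * (v 0 i * v 0 j)) ^+ 2 =
   A i j ^+ 2 + a ^+ 2 * (i == j)%:R + b ^+ 2 * (v 0 i ^+ 2 * v 0 j ^+ 2)
   + 2 * a * (A i j * (i == j)%:R) + 2 * b * (A i j * v 0 i * v 0 j)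
   + 2 * a * b * ((i == j)%:R * v 0 i * v 0 j).
  move=> i j; case: (i == j); rewrite /= ?mulr1n ?mulr0n; ring.
under eq_bigr => i _ do under eq_bigr => j _ do rewrite E.
under eq_bigr => i _ do rewrite !big_split /= -!mulr_sumr.
rewrite !big_split /= -!mulr_sumr.
congr (_ + _ + _ + _ + _ + _).
- rewrite (eq_bigr (fun _ => 1)); last first.
    by move=> i _; rewrite (bigD1 i) //= eqxx big1 ?addr0 // => j /negbTE; rewrite eq_sym => ->.
  by rewrite sumr_const card_ord.
- by congr (_ * _); rewrite -mulr_suml expr2.
- congr (_ * _); rewrite /mxtrace; apply: eq_bigr => i _.
  rewrite (bigD1 i) //= eqxx mulr1 big1 ?addr0 // => j /negbTE; rewrite eq_sym => ->.
  by rewrite mulr0.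
- congr (_ * _); apply: eq_bigr => i _.
  rewrite (bigD1 i) //= eqxx mul1r big1 ?addr0 ?expr2 // => j /negbTE; rewrite eq_sym => ->.
  by rewrite !mul0r.
Qed.

Lemma eig_quad n (A : 'M[R]_n) (v : 'rV[R]_n) (l : R) :
  v *m A = l *: v ->
  \sum_i \sum_j A i j * v 0 i * v 0 j = l * \sum_i v 0 i ^+ 2.
Proof.
move=> /rowP E; rewrite exchange_big /= mulr_sumr; apply: eq_bigr => j _.
have := E j; rewrite !mxE => Ej.
rewrite expr2 mulrA -Ej mulr_suml; apply: eq_bigr => i _.
ring.
Qed.

Lemma eig_bound n (A : 'M[R]_n) (v : 'rV[R]_n) (l : R) :
  (2 <= n)%N -> v *m A = l *: v -> v != 0 ->
  n%:R * (l - \tr A / n%:R) ^+ 2 <=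
  (n%:R - 1) * (\sum_i \sum_j A i j ^+ 2 - (\tr A) ^+ 2 / n%:R).
Proof.
move=> n2 Ev v0.
set N := \sum_i v 0 i ^+ 2.
have N0 : 0 < N.
  rewrite lt_def sumr_ge0 ?andbT; last by move=> i _; rewrite sqr_ge0.
  apply/negP => /eqP /psumr_eq0P H; apply/negP: v0; rewrite negbK; apply/eqP/rowP => j.
  rewrite mxE; have := H (fun i _ => sqr_ge0 _) j isT; move/eqP; rewrite sqrf_eq0.
  by move/eqP.
set m := \tr A / n%:R; set mu := l - m; set k := mu / (n%:R - 1).
have := sum_sq_expand A v (k - m) (- (mu + k) / N).
rewrite (eig_quad Ev) -/N.
move=> Hs.
have : 0 <= \sum_i \sum_j (A i j + (k - m) * (i == j)%:R + - (mu + k) / N * (v 0 i * v 0 j)) ^+ 2.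
  by apply: sumr_ge0 => i _; apply: sumr_ge0 => j _; apply: sqr_ge0.
rewrite Hs => {Hs}.
have n1 : 1 < (n%:R : R) by rewrite ltr1n.
have n0 : (n%:R : R) != 0 by rewrite gt_eqF // (lt_trans ltr01).
have n10 : (n%:R - 1 : R) != 0 by rewrite subr_eq0 gt_eqF.
set S2 := \sum_i \sum_j _.
set T := \tr A.
have hm : T = m * n%:R by rewrite /m divfK.
have N0' : N != 0 by rewrite gt_eqF.
have n1p : 0 < (n%:R - 1 : R) by rewrite subr_gt0.
have -> : S2 + (k - m) ^+ 2 * n%:R + (- (mu + k) / N) ^+ 2 * N ^+ 2 + 2 * (k - m) * T +
      2 * (- (mu + k) / N) * (l * N) + 2 * (k - m) * (- (mu + k) / N) * N =
      (S2 - T ^+ 2 / n%:R) - n%:R * mu ^+ 2 / (n%:R - 1).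
  rewrite /k /mu hm; field; rewrite n0 N0' n10 //.
rewrite subr_ge0 ler_pdivrMr //.
by rewrite [X in _ -> _ <= X]mulrC.
Qed.
End PC.
Section PA.
Variable R : realFieldType.

Lemma cauchy_psd n (x : 'I_n -> R) : (forall i, 0 < x i) ->
  forall v : 'I_n -> R, 0 <= \sum_i \sum_j v i * v j / (x i + x j).
Proof.
elim: n x => [|n IH] x xp v; first by rewrite big_ord0.
set x0 := x ord0.
pose x' i := x (lift ord0 i).
pose v' i := v (lift ord0 i).
pose w i := v' i * (x' i - x0) / (x' i + x0).
pose S := \sum_j v' j / (x0 + x' j).
have x0p : 0 < x0 by apply: xp.
have x'p i : 0 < x' i by apply: xp.
have pw : forall i j, v' i * v' j / (x' i + x' j) =
    2 * x0 * ((v' i / (x0 + x' i)) * (v' j / (x0 + x' j))) + w i * w j / (x' i + x' j).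
  move=> i j; rewrite /w.
  have h1 : x' i + x' j != 0 by rewrite gt_eqF // addr_gt0.
  have h2 : x0 + x' i != 0 by rewrite gt_eqF // addr_gt0.
  have h3 : x0 + x' j != 0 by rewrite gt_eqF // addr_gt0.
  have h4 : x' i + x0 != 0 by rewrite addrC.
  have h5 : x' j + x0 != 0 by rewrite addrC.
  by field; rewrite h1 h4 h5.
have E : \sum_i \sum_j v i * v j / (x i + x j) =
   (v ord0 + 2 * x0 * S) ^+ 2 / (2 * x0) + \sum_i \sum_j w i * w j / (x' i + x' j).
  under eq_bigr => i _ do rewrite big_ord_recl /=.
  rewrite big_ord_recl /= big_split /=.
  under [X in _ + (_ + X)]eq_bigr => i _ do under eq_bigr => j _ do rewrite pw.
  under [X in _ + (_ + X)]eq_bigr => i _ do rewrite big_split /= -mulr_sumr.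
  rewrite big_split /= -mulr_sumr.
  have e1 : \sum_i v (lift ord0 i) * v ord0 / (x (lift ord0 i) + x ord0) = v ord0 * S.
    rewrite /S mulr_sumr; apply: eq_bigr => i _; rewrite /v' /x' /x0 addrC; ring.
  have e2 : \sum_i v ord0 * v (lift ord0 i) / (x ord0 + x (lift ord0 i)) = v ord0 * S.
    rewrite /S mulr_sumr; apply: eq_bigr => i _; rewrite /v' /x' /x0; ring.
  have e3 : \sum_i (\sum_j v' i / (x0 + x' i) * (v' j / (x0 + x' j))) = S ^+ 2.
    by rewrite expr2 mulr_suml; apply: eq_bigr => i _; rewrite mulr_sumr.
  rewrite e1 e2 e3 -/x0.
  have h : 2 * x0 != 0 by rewrite gt_eqF // mulr_gt0.
  rewrite /x' /v'; field; rewrite !gt_eqF ?addr_gt0 //.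
rewrite E addr_ge0 //; last exact: IH.
by rewrite divr_ge0 ?sqr_ge0 // mulr_ge0 // ltW.
Qed.
End PA.
Section PA2.
Variable R : realFieldType.

Definition cau n (x : 'I_n -> R) : 'M[R]_n := \matrix_(i, j) (x i + x j)^-1.

Lemma lift0_neq n (k : 'I_n) : (lift ord0 k == ord0) = false.
Proof. by apply/negbTE; rewrite eq_sym neq_lift. Qed.

Lemma lift0_neq' n (k : 'I_n) : (ord0 == lift ord0 k) = false.
Proof. by rewrite eq_sym lift0_neq. Qed.

Lemma sum_delta n (i : 'I_n) (f : 'I_n -> R) :
  \sum_k (i == k)%:R * f k = f i.
Proof.
rewrite (bigD1 i) //= eqxx mul1r big1 ?addr0 // => k /negbTE.
by rewrite eq_sym => ->; rewrite mul0r.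
Qed.

Lemma cauchy_det_step n (x : 'I_n.+1 -> R) : (forall i, 0 < x i) ->
  \det (cau x) = (2 * x ord0)^-1 *
     (\prod_i ((x (lift ord0 i) - x ord0) / (x (lift ord0 i) + x ord0))) ^+ 2 *
     \det (cau (fun i => x (lift ord0 i))).
Proof.
move=> xp; set x0 := x ord0.
pose L : 'M[R]_n.+1 := \matrix_(i, j) (if j == ord0 then
          (if i == ord0 then 1 else 2 * x0 / (x0 + x i)) else (i == j)%:R).
pose d i := (x i - x0) / (x i + x0).
pose K : 'M[R]_n.+1 := \matrix_(i, j) (if i == ord0 then (if j == ord0 then (2 * x0)^-1 else 0)
          else if j == ord0 then 0 else d i * d j / (x i + x j)).
have x0p : 0 < x0 by apply: xp.
have KL0 k : K (lift ord0 k) ord0 = 0 by rewrite mxE lift0_neq eqxx.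
have K0L k : K ord0 (lift ord0 k) = 0 by rewrite mxE lift0_neq eqxx.
have KLL k m : K (lift ord0 k) (lift ord0 m) =
   d (lift ord0 k) * d (lift ord0 m) / (x (lift ord0 k) + x (lift ord0 m)).
  by rewrite mxE !lift0_neq.
have LL i k : L i (lift ord0 k) = (i == lift ord0 k)%:R by rewrite mxE lift0_neq.
have E : cau x = L *m K *m L^T.
  apply/matrixP => i j; rewrite !mxE.
  under eq_bigr => m _ do rewrite !mxE big_ord_recl !mxE.
  rewrite big_ord_recl /=.
  under eq_bigr => k _ do rewrite LL KL0 mulr0.
  rewrite big1_eq addr0 mulr0.
  under eq_bigr => m _ do (rewrite add0r; under eq_bigr => k _ do rewrite LL KLL).
  have x0n : x0 != 0 by rewrite gt_eqF.
  have xpos k : x0 + x k != 0 by rewrite gt_eqF // addr_gt0.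
  have xpos' k : x k + x0 != 0 by rewrite addrC.
  have x00 : x0 + x0 != 0 by apply: xpos.
  have xx k m : x k + x m != 0 by rewrite gt_eqF // addr_gt0.
  case: (unliftP ord0 i) => [i'|] ->; last first.
    rewrite eqxx.
    under eq_bigr => m _ do (under eq_bigr => k _ do rewrite eq_sym lift0_neq mul0r).
    rewrite big1 => [|m _]; last by rewrite big1_eq mul0r.
    rewrite addr0.
    case: (unliftP ord0 j) => [j'|] ->; last first.
      rewrite eqxx -/x0; field. by rewrite x0n x00.
    by rewrite lift0_neq -/x0; field; rewrite xpos x0n.
  rewrite lift0_neq.
  under eq_bigr => m _ do (under eq_bigr => k _ do rewrite (inj_eq lift_inj)).
  under eq_bigr => m _ do rewrite sum_delta.
  have dd k : d k = (x k - x0) / (x k + x0) by [].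
  case: (unliftP ord0 j) => [j'|] ->; last first.
    under eq_bigr => m _ do rewrite lift0_neq' mulr0.
    rewrite big1_eq addr0 eqxx -/x0; field.
    by rewrite ?(x0n, xpos, xpos', xx).
  under eq_bigr => m _ do rewrite (inj_eq lift_inj) mulrC.
  rewrite sum_delta lift0_neq !dd.
  by field; rewrite ?(x0n, xpos, xpos', xx).
have dL : \det L = 1.
  rewrite det_trig; last first.
    apply/forallP => i; apply/forallP => j; apply/implyP => ij.
    rewrite mxE; have [j0|jn0] := eqVneq j ord0; first by move: ij; rewrite j0.
    by rewrite -val_eqE /= ltn_eqF.
  by rewrite big1 // => i _; rewrite mxE eqxx; case: (i == ord0).
rewrite E !det_mulmx det_tr dL mul1r mulr1.
rewrite (expand_det_row _ ord0) big_ord_recl big1 ?addr0; last first.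
  by move=> k _; rewrite K0L mul0r.
rewrite mxE !eqxx /cofactor /= expr0 mul1r.
pose dv : 'rV[R]_n := \row_i d (lift ord0 i).
have -> : row' ord0 (col' ord0 K) = diag_mx dv *m cau (fun i => x (lift ord0 i)) *m diag_mx dv.
  apply/matrixP => i j; rewrite mul_mx_diag mul_diag_mx !mxE !lift0_neq.
  by rewrite /dv ?mxE; field; rewrite gt_eqF // addr_gt0.
rewrite !det_mulmx !det_diag /dv.
under eq_bigr => i _ do rewrite mxE.
rewrite -/x0; ring.
Qed.
End PA2.
Section PA3.
Variable R : realFieldType.

Definition Pc n (x : 'I_n -> R) := \prod_(i < n) \prod_(j < n | (i < j)%N) (x i - x j) ^+ 2.
Definition Dc n (x : 'I_n -> R) := \prod_(i < n) \prod_(j < n) (x i + x j).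

Lemma Pc_rec n (x : 'I_n.+1 -> R) :
  Pc x = (\prod_(j < n) (x (lift ord0 j) - x ord0)) ^+ 2 * Pc (fun i => x (lift ord0 i)).
Proof.
rewrite /Pc big_ord_recl; congr (_ * _).
  rewrite big_mkcond big_ord_recl /= mul1r -prodrXl; apply: eq_bigr => j _.
  by rewrite -sqrrN opprB.
apply: eq_bigr => i _; rewrite big_mkcond big_ord_recl /= mul1r.
by rewrite [in RHS]big_mkcond; apply: eq_bigr => j _; rewrite /bump !add1n ltnS.
Qed.

Lemma Dc_rec n (x : 'I_n.+1 -> R) :
  Dc x = (x ord0 + x ord0) * (\prod_(j < n) (x (lift ord0 j) + x ord0)) ^+ 2 *
         Dc (fun i => x (lift ord0 i)).
Proof.
rewrite /Dc.
under eq_bigr => i _ do rewrite big_ord_recl.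
rewrite big_ord_recl /= big_split /= expr2 !mulrA.
congr (_ * _ * _ * _).
by apply: eq_bigr => j _; rewrite addrC.
Qed.

Lemma Dc_gt0 n (x : 'I_n -> R) : (forall i, 0 < x i) -> 0 < Dc x.
Proof.
by move=> xp; apply: prodr_gt0 => i _; apply: prodr_gt0 => j _; rewrite addr_gt0.
Qed.

Lemma cauchy_det n (x : 'I_n -> R) : (forall i, 0 < x i) -> \det (cau x) = Pc x / Dc x.
Proof.
elim: n x => [|n IH] x xp.
  by rewrite det_mx00 /Pc /Dc !big_ord0 divr1.
rewrite cauchy_det_step // IH; last by move=> i; apply: xp.
rewrite Pc_rec Dc_rec prodf_div.
have h1 : \prod_(j < n) (x (lift ord0 j) + x ord0) != 0.
  by apply/prodf_neq0 => j _; rewrite gt_eqF // addr_gt0.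
have h2 : Dc (fun i => x (lift ord0 i)) != 0 by rewrite gt_eqF // Dc_gt0.
have h3 : x ord0 != 0 by rewrite gt_eqF.
have h4 : x ord0 + x ord0 != 0 by rewrite gt_eqF // addr_gt0.
by field; rewrite h1 h2 h3 h4.
Qed.
End PA3.
Section PB.
Variable R : realFieldType.

Lemma quad_form_eq n (A : 'M[R]_n) (a : 'I_n -> R) :
  \sum_j (\sum_i a i * A i j) * a j = \sum_i \sum_j a i * a j * A i j.
Proof.
under eq_bigr => j _ do rewrite mulr_suml.
rewrite exchange_big /=; apply: eq_bigr => i _; apply: eq_bigr => j _; ring.
Qed.

Lemma eig_real n (A : 'M[R]_n) (a b : 'I_n -> R) (p q : R) :
  (forall i j, A i j = A j i) ->
  (forall v : 'I_n -> R, 0 <= \sum_i \sum_j v i * v j * A i j) ->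
  (forall j, \sum_i a i * A i j = p * a j - q * b j) ->
  (forall j, \sum_i b i * A i j = p * b j + q * a j) ->
  0 < \sum_i (a i ^+ 2 + b i ^+ 2) -> q = 0 /\ 0 <= p.
Proof.
move=> Asym Apsd H1 H2 Npos.
split.
  have key : \sum_j (p * a j - q * b j) * b j = \sum_i a i * (p * b i + q * a i).
    rewrite -(eq_bigr _ (fun j _ => congr1 (fun t => t * b j) (H1 j))).
    rewrite -(eq_bigr _ (fun i _ => congr1 (fun t => a i * t) (H2 i))).
    under eq_bigr => j _ do rewrite mulr_suml.
    rewrite exchange_big /=; apply: eq_bigr => i _; rewrite mulr_sumr.
    by apply: eq_bigr => j _; rewrite Asym; ring.
  have : q * \sum_i (a i ^+ 2 + b i ^+ 2) = 0.
    rewrite mulr_sumr.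
    rewrite (eq_bigr (fun i => a i * (p * b i + q * a i) - (p * a i - q * b i) * b i)).
      by rewrite sumrB key subrr.
    by move=> i _; ring.
  by move/eqP; rewrite mulf_eq0 (gt_eqF Npos) orbF => /eqP.
have : 0 <= \sum_i \sum_j a i * a j * A i j + \sum_i \sum_j b i * b j * A i j.
  by rewrite addr_ge0.
rewrite -!quad_form_eq.
under eq_bigr => j _ do rewrite H1.
under [X in _ <= _ + X]eq_bigr => j _ do rewrite H2.
rewrite -big_split /=.
rewrite (eq_bigr (fun i => p * (a i ^+ 2 + b i ^+ 2))); last by move=> i _; ring.
by rewrite -mulr_sumr pmulr_lge0.
Qed.
End PB.
Section PB2.
Variable R : realType.
Local Open Scope complex_scope.
Local Notation cRe := (@complex.Re _).
Local Notation cIm := (@complex.Im _).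

Lemma Re_sum (I : Type) (r : seq I) (F : I -> R[i]) :
  cRe (\sum_(i <- r) F i) = \sum_(i <- r) cRe (F i).
Proof.
elim: r => [|x r IH]; first by rewrite !big_nil; reflexivity.
by rewrite !big_cons -IH; case: (F x); case: (\sum_(i <- r) F i); reflexivity.
Qed.

Lemma Im_sum (I : Type) (r : seq I) (F : I -> R[i]) :
  cIm (\sum_(i <- r) F i) = \sum_(i <- r) cIm (F i).
Proof.
elim: r => [|x r IH]; first by rewrite !big_nil; reflexivity.
by rewrite !big_cons -IH; case: (F x); case: (\sum_(i <- r) F i); reflexivity.
Qed.

Lemma mulcR_Re (u : R[i]) (k : R) : cRe (u * k%:C) = cRe u * k.
Proof. by case: u => a b /=; rewrite mulr0 subr0. Qed.

Lemma mulcR_Im (u : R[i]) (k : R) : cIm (u * k%:C) = cIm u * k.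
Proof. by case: u => a b /=; rewrite mulr0 add0r. Qed.

Lemma mulc_Re (z u : R[i]) : cRe (z * u) = cRe z * cRe u - cIm z * cIm u.
Proof. by case: z => a b; case: u => c d. Qed.

Lemma mulc_Im (z u : R[i]) : cIm (z * u) = cRe z * cIm u + cIm z * cRe u.
Proof. by case: z => a b; case: u => c d. Qed.

End PB2.
Section PB3.
Variable R : realType.
Local Open Scope complex_scope.
Local Notation cRe := (@complex.Re _).
Local Notation cIm := (@complex.Im _).

Lemma sym_psd_charpoly (n : nat) (A : 'M[R]_n) :
  (forall i j, A i j = A j i) ->
  (forall v : 'I_n -> R, 0 <= \sum_i \sum_j v i * v j * A i j) ->
  exists2 rs : seq R, char_poly A = \prod_(r <- rs) ('X - r%:P) & all (fun r => 0 <= r) rs.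
Proof.
move=> Asym Apsd.
pose f := real_complex R.
have hp := map_char_poly f A.
case: (closed_field_poly_normal (char_poly (map_mx f A))) => rs Hrs.
rewrite (monicP (char_poly_monic _)) scale1r in Hrs.
have Hz : forall z, z \in rs -> cIm z = 0 /\ 0 <= cRe z.
  move=> z zin; have : root (char_poly (map_mx f A)) z by rewrite Hrs root_prod_XsubC.
  rewrite -eigenvalue_root_char => /eigenvalueP [u /rowP Hu u0].
  suff [h1 h2] : cIm z = 0 /\ 0 <= cRe z by [].
  apply: (eig_real (a := fun i => cRe (u 0 i)) (b := fun i => cIm (u 0 i)) Asym Apsd).
  - move=> j; have := congr1 cRe (Hu j); rewrite !mxE Re_sum mulc_Re => <-.
    by apply: eq_bigr => i _; rewrite mxE mulcR_Re.
  - move=> j; have := congr1 cIm (Hu j); rewrite !mxE Im_sum mulc_Im => <-.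
    by apply: eq_bigr => i _; rewrite mxE mulcR_Im.
  - rewrite lt_def sumr_ge0 ?andbT; last by move=> i _; rewrite addr_ge0 ?sqr_ge0.
    apply/negP => /eqP H; apply/negP: u0; rewrite negbK; apply/eqP/rowP => j.
    have := psumr_eq0P (fun i _ => addr_ge0 (sqr_ge0 (cRe (u 0 i))) (sqr_ge0 (cIm (u 0 i)))) H.
    move=> /(_ j isT) /eqP; rewrite paddr_eq0 ?sqr_ge0 // !sqrf_eq0 => /andP [/eqP ha /eqP hb].
    rewrite mxE; move: ha hb; case: (u 0 j) => a b /= -> ->; reflexivity.
exists (map cRe rs).
  apply: (@map_poly_inj _ _ f); rewrite hp Hrs map_prod_XsubC big_map.
  apply: eq_big_seq => z zin; congr ('X - _%:P).
  by have [h1 _] := Hz z zin; move: h1; case: z {zin} => a b /= ->.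
apply/allP => r /mapP [z zin ->]; by have [_ h2] := Hz z zin.
Qed.
End PB3.
Section PB4.
Variable R : realFieldType.

Lemma prod_XsubC_coef0 (rs : seq R) :
  (\prod_(r <- rs) ('X - r%:P))`_0 = (-1) ^+ size rs * \prod_(r <- rs) r.
Proof.
elim: rs => [|r rs IH]; first by rewrite !big_nil coef1 mul1r.
rewrite !big_cons coef0M IH coefB coefX coefC /= exprS; ring.
Qed.

Lemma prod_XsubC_trace (rs : seq R) :
  ('X * \prod_(r <- rs) ('X - r%:P))`_(size rs) = - \sum_(r <- rs) r.
Proof.
elim: rs => [|x d IHd].
  by rewrite !big_nil mulr1 coefX oppr0.
rewrite !big_cons coefXM mulrBl coefB IHd opprD addrC; congr (- _ + _).
rewrite mul_polyC coefZ [size _]/= -(size_prod_XsubC _ id) -lead_coefE.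
by rewrite (monicP _) ?monic_prod_XsubC ?mulr1.
Qed.

Lemma amgm_rem (rs : seq R) (l : R) (k : nat) :
  all (fun r => 0 <= r) rs -> l \in rs -> size rs = k.+1 -> 0 <= l ->
  \prod_(r <- rs) r <= l * ((\sum_(r <- rs) r - l) / k%:R) ^+ k.
Proof.
move=> /allP rs0 lin sz l0.
have pe := perm_to_rem lin.
rewrite (perm_big _ pe) (perm_big _ pe) !big_cons /= (addrC l) addrK.
apply: ler_wpM2l => //.
set s := rem l rs.
have ss : size s = k by rewrite size_rem // sz.
have s0 : forall i : 'I_k, 0 <= s`_i.
  move=> i; apply: rs0; apply: (mem_rem (x := l)); apply: mem_nth; rewrite ss //.
rewrite [\prod_(r <- s) r](big_nth 0) [\sum_(r <- s) r](big_nth 0) ss !big_mkord.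
have Hc : #|(predT : {pred 'I_k})| = k by rewrite card_ord.
have := (leif_AGM (A := predT) (fun i _ => s0 i)).1.
by rewrite Hc.
Qed.
End PB4.
Section PB5.
Variable R : realType.

Lemma eig_lower n (A : 'M[R]_n) (l : R) :
  (0 < n)%N ->
  (forall i j, A i j = A j i) ->
  (forall v : 'I_n -> R, 0 <= \sum_i \sum_j v i * v j * A i j) ->
  eigenvalue A l ->
  [/\ 0 <= l, l <= \tr A & \det A <= l * ((\tr A - l) / (n.-1)%:R) ^+ n.-1].
Proof.
move=> n0 Asym Apsd ev.
have [rs Hc Hall] := sym_psd_charpoly Asym Apsd.
have sz : size rs = n.
  by have := size_char_poly A; rewrite Hc size_prod_XsubC => -[].
have lin : l \in rs by rewrite -root_prod_XsubC -Hc -eigenvalue_root_char.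
have l0 : 0 <= l by move/allP: Hall => /(_ l lin).
have hdet : \det A = \prod_(r <- rs) r.
  have hu : ((-1) ^+ n : R) \is a GRing.unit by rewrite unitrX // unitrN unitr1.
  by have := char_poly_det A; rewrite Hc prod_XsubC_coef0 sz => /(mulrI hu).
have htr : \tr A = \sum_(r <- rs) r.
  have := char_poly_trace A n0; rewrite Hc.
  have := prod_XsubC_trace rs; rewrite coefXM sz (gtn_eqF n0) => ->.
  by move/eqP; rewrite eqr_opp => /eqP.
split => //.
  rewrite htr (perm_big _ (perm_to_rem lin)) big_cons /= lerDl.
  rewrite big_seq; apply: sumr_ge0 => r /= rin.
  by move/allP: Hall; apply; apply: (mem_rem rin).
rewrite hdet htr; apply: amgm_rem => //.
by rewrite sz prednK.
Qed.
End PB5.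
Section PD.
Variable R : realType.

Lemma sqrt_bound (c W y : R) : 0 <= c -> y ^+ 2 <= c ^+ 2 * W -> `|y| <= c * Num.sqrt W.
Proof.
move=> c0 h; case: (lerP 0 W) => W0.
  rewrite -sqrtr_sqr -[c](ger0_norm c0) -sqrtr_sqr -sqrtrM ?sqr_ge0 //.
  exact: ler_wsqrtr.
have : y ^+ 2 <= 0.
  apply: (le_trans h); rewrite mulr_ge0_le0 ?sqr_ge0 // ltW //.
move=> H.
have y0 : y ^+ 2 = 0 by apply/eqP; rewrite eq_le H sqr_ge0.
move/eqP: y0; rewrite sqrf_eq0 => /eqP ->.
by rewrite normr0 mulr_ge0 ?sqrtr_ge0.
Qed.

Lemma vol_gt0 d : 0 < unit_ball_vol R d.
Proof.
suff : forall d, 0 < unit_ball_vol R d /\ 0 < unit_ball_vol R d.+1 by move=> /(_ d) [].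
elim => [|k [h1 h2]]; first by split => //=; rewrite ltr0n.
split => //=; rewrite mulr_gt0 // divr_gt0 ?ltr0n // mulr_gt0 ?ltr0n //.
exact: pi_gt0.
Qed.
End PD.
Unset Implicit Arguments.
Theorem theorem6p7 (R : realType) (d n : nat) (V : R) (tau : 'I_n -> R) :
  (1 <= d)%N -> (2 <= n)%N -> 0 <= V ->
  (forall i : 'I_n, - (d%:R / 2) < tau i) ->
  (forall i j : 'I_n, (i < j)%N -> tau i < tau j) ->
  forall lambda : R, eigenvalue (Sigma d V tau) lambda ->
    S_lower d V tau <= lambda /\ lambda <= S_upper d V tau.
Proof.
move=> hd hn hV htau htaum lambda ev.
have n0 : (0 < n)%N by apply: leq_trans hn.
set x := xpar d tau.
have xp : forall i, 0 < x i by move=> i; have := htau i; rewrite /x /xpar; lra.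
have xn0 : forall i j, x i + x j != 0 by move=> i j; rewrite gt_eqF // addr_gt0.
set ka := unit_ball_vol R d.
have ka0 : 0 < ka by apply: vol_gt0.
set c := V * d%:R * ka / 2.
have c0 : 0 <= c.
  rewrite /c; apply: divr_ge0 => //; apply: mulr_ge0; last exact: ltW.
  by apply: mulr_ge0 => //; rewrite ler0n.
have Vc : V * d%:R * ka = 2 * c by rewrite /c; field.
set A := Sigma d V tau.
have Sig : A = c *: cau x.
  by apply/matrixP => i j; rewrite !mxE /c /ka invfM; ring.
have Asym : forall i j, A i j = A j i by move=> i j; rewrite Sig !mxE addrC.
have Apsd : forall v : 'I_n -> R, 0 <= \sum_i \sum_j v i * v j * A i j.
  move=> v; rewrite (eq_bigr (fun i => c * \sum_j v i * v j / (x i + x j))).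
    by rewrite -mulr_sumr mulr_ge0 // cauchy_psd.
  move=> i _; rewrite mulr_sumr; apply: eq_bigr => j _; rewrite Sig !mxE; ring.
set H := \sum_(i < n) 1 / (2 * x i).
set G := \sum_(l < n) \sum_(k < n) 1 / (x k + x l) ^+ 2.
set N := (n%:R : R).
have N2 : 2 <= N by rewrite /N ler_nat.
have Nn0 : N != 0 by rewrite gt_eqF // (lt_le_trans _ N2).
have hQ : Qpar d tau = N * G - H ^+ 2.
  rewrite /Qpar -/x -/H -/N; congr (_ - _); rewrite mulr_sumr; apply: eq_bigr => l _.
  by rewrite mulr_sumr; apply: eq_bigr => k _; rewrite mul1r.
have htr : \tr A = c * H.
  rewrite Sig mxtraceZ; congr (_ * _); apply: eq_bigr => i _; rewrite mxE.
  by field; rewrite xn0 andbT gt_eqF ?xp.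
have hS2 : \sum_i \sum_j A i j ^+ 2 = c ^+ 2 * G.
  rewrite /G mulr_sumr; apply: eq_bigr => i _; rewrite mulr_sumr; apply: eq_bigr => j _.
  by rewrite Sig !mxE addrC; field; rewrite addrC xn0.
have hdet : \det A = c ^+ n * (Pc x / Dc x) by rewrite Sig detZ cauchy_det.
have [v Ev v0] := eigenvalueP ev.
have hb := eig_bound hn Ev v0.
have [l0 ltr hl] := eig_lower n0 Asym Apsd ev.
rewrite htr hS2 -/N in hb.
set s1 := Num.sqrt (N - 1).
set sq := Num.sqrt (Qpar d tau).
have N1 : 0 < N - 1 by rewrite subr_gt0 (lt_le_trans _ N2) // ltr1n.
have s1p : 0 < s1 by rewrite sqrtr_gt0.
have s1sq : s1 ^+ 2 = N - 1 by rewrite sqr_sqrtr // ltW.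
have sW : Num.sqrt ((N - 1) * Qpar d tau) = s1 * sq by rewrite sqrtrM // ltW.
set mu := lambda - c * H / N.
have hmu : `|N * mu| <= c * (s1 * sq).
  rewrite -sW; apply: sqrt_bound => //.
  have -> : (N * mu) ^+ 2 = N * (N * mu ^+ 2) by ring.
  apply: (le_trans (ler_wpM2l (ltW (lt_le_trans _ N2)) hb)) => //.
  rewrite hQ le_eqVlt; apply/orP; left; apply/eqP; field; exact: Nn0.
move: hmu; rewrite ler_norml => /andP [hm1 hm2].
have Hp : 0 < H.
  apply: (lt_le_trans (y := 1 / (2 * x (Ordinal n0)))); first by rewrite divr_gt0 // mulr_gt0.
  rewrite /H (bigD1 (Ordinal n0)) //= lerDl; apply: sumr_ge0 => i _.
  by rewrite divr_ge0 // mulr_ge0 // ltW.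
split; last first.
  rewrite /S_upper -/x -/H -/ka -/N sW Vc.
  have N0 : 0 < 2 * N by rewrite mulr_gt0 // (lt_le_trans _ N2).
  rewrite ler_pdivlMr //.
  have e : N * mu = N * lambda - c * H by rewrite /mu; field.
  rewrite e in hm2; lra.
rewrite /S_lower -/x -/ka -/N -/s1 -/sq Vc.
have hs : \sum_(i < n) s1 / (2 * x i) = s1 * H.
  by rewrite /H mulr_sumr; apply: eq_bigr => i _; rewrite mul1r.
rewrite hs.
have eP : \prod_(i < n) \prod_(j < n | (i < j)%N) (x i - x j) ^+ 2 = Pc x by [].
have eD : \prod_(i < n) \prod_(j < n) (x i + x j) = Dc x by [].
rewrite eP eD.
set B := (s1 * H + sq) / (N * s1).
set k := n.-1.
have ek : k%:R = N - 1 by rewrite /k /N -subn1 natrB.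
rewrite htr hdet ek in hl.
set Y := (c * H - lambda) / (N - 1).
have ltr' : lambda <= c * H by rewrite -htr.
have hY0 : 0 <= Y.
  rewrite /Y divr_ge0 //; first by rewrite subr_ge0.
  exact: ltW.
have sq0 : 0 <= sq by apply: sqrtr_ge0.
have NS : 0 < N * s1 by rewrite mulr_gt0 // (lt_le_trans _ N2).
have hYB : Y <= c * B.
  rewrite /Y /B ler_pdivrMr //.
  have -> : c * ((s1 * H + sq) / (N * s1)) * (N - 1) = c * (s1 * H + sq) * (N - 1) / (N * s1).
    by field; rewrite gt_eqF.
  rewrite ler_pdivlMr //.
  have e : N * mu = N * lambda - c * H by rewrite /mu; field.
  rewrite e in hm1.
  have hm1' := ler_wpM2r (ltW s1p) hm1.
  have e2 : - (c * (s1 * sq)) * s1 = - (c * sq * (N - 1)) by rewrite -s1sq; ring.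
  rewrite e2 in hm1'.
  lra.
have cB0 : 0 <= c * B by apply: le_trans hYB.
have hYk : Y ^+ k <= (c * B) ^+ k by apply: lerXn2r; rewrite ?nnegrE.
have hdet' : c ^+ n * (Pc x / Dc x) <= lambda * (c * B) ^+ k.
  by apply: (le_trans hl); apply: ler_wpM2l.
have Dp : 0 < Dc x by apply: Dc_gt0.
case: (eqVneq c 0) => [c00|cn0].
  by rewrite c00 mulr0 mul0r mul0r.
have cp : 0 < c by rewrite lt_def cn0 c0.
have Bp : 0 < B.
  rewrite /B divr_gt0 // ltr_wpDr // mulr_gt0 //.
have ecn : c ^+ n = c ^+ k.+1 by rewrite /k prednK.
have e1 : c ^+ k.+1 * (Pc x / Dc x) = c ^+ k * (c * (Pc x / Dc x)) by rewrite exprS; ring.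
have e2 : lambda * (c * B) ^+ k = c ^+ k * (lambda * B ^+ k) by rewrite exprMn; ring.
rewrite ecn e1 e2 ler_pM2l ?exprn_gt0 // in hdet'.
rewrite ler_pdivrMr; last by rewrite mulr_gt0 ?exprn_gt0 // mulr_gt0.
have e3 : 2 * c * Pc x = c * (Pc x / Dc x) * (2 * Dc x) by field; rewrite gt_eqF.
rewrite e3 (_ : lambda * (2 * Dc x * B ^+ k) = lambda * B ^+ k * (2 * Dc x)); last by ring.
by apply: ler_wpM2r => //; rewrite mulr_ge0 // ltW.
Qed.
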